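(* Assume $W_c$ satisfies Assumption 1. Then for all integers $k,n\ge2$, \[ \log P_j(k,n)\le\inf_{s\in(0,1)}\Big[-nsR+(n-1)\,U\big[W_s,W_c,\downarrow;\tfrac{k-1}{n-1}\big](s)+\overline\delta_{W_s}(s)+\overline\delta_{W_c}(s)\Big]. \]
   Context: Setup. $\mathcal M$ is a finite set and $W_s=\{W_s(m|m')\}$ an irreducible aperiodic transition matrix on $\mathcal M$; the message $M^k=(M_1,\dots,M_k)$ has law $P_{M^k}(m^k)=P_{M_1}(m_1)\prod_{i=2}^kW_s(m_i|m_{i-1})$ for some initial distribution $P_{M_1}$. $\mathcal X$ is a finite abelian group, $\mathcal Z$ a finite set, $W_c=\{W_c(x,z|x',z')\}$ an irreducible aperiodic transition matrix on $\mathcal X\times\mathcal Z$, and $(X^n,Z^n)$ has law $P_{X^nZ^n}(x^n,z^n)=P_{X_1Z_1}(x_1,z_1)\prod_{i=2}^nW_c(x_i,z_i|x_{i-1},z_{i-1})$ for an initial distribution $P_{X_1Z_1}$ with marginal $P_{Z_1}$. The channel maps input $\tilde x^n\in\mathcal X^n$ to output $(x^n,z^n)$ with probability $P_{X^nZ^n}(x^n-\tilde x^n,z^n)$. A code is $(\mathsf e,\mathsf d)$ with $\mathsf e:\mathcal M^k\to\mathcal X^n$, $\mathsf d:(\mathcal X\times\mathcal Z)^n\to\mathcal M^k$; $P_j(k,n)$ is the infimum over codes of $\sum_{m^k}P_{M^k}(m^k)\Pr[\mathsf d(\text{output})\ne m^k\mid\text{input }\mathsf e(m^k)]$. $R:=\log|\mathcal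 X|$. Assumption 1: $\sum_xW_c(x,z|x',z')$ does not depend on $x'$; call it $W_{c,Z}(z|z')$. Perron–Frobenius notation: entrywise powers $a^t$ of transition probabilities are taken to be $0$ when $a=0$. For a nonnegative irreducible matrix $A$ indexed by a finite set, $\lambda(A)$ is its Perron–Frobenius eigenvalue and $v_A$ the positive vector with $\sum_iv_A(i)A(i,j)=\lambda(A)v_A(j)$ for all $j$, normalized so $\min_iv_A(i)=1$. Quantities. $A^s_\theta(m,m'):=W_s(m|m')^{1-\theta}$; $A^c_\theta((x,z),(x',z')):=W_c(x,z|x',z')^{1-\theta}W_{c,Z}(z|z')^{\theta}$. $\theta H^{W_s}_{1-\theta}(M):=\log\lambda(A^s_\theta)$, $\theta H^{W_c,\downarrow}_{1-\theta}(X|Z):=\log\lambda(A^c_\theta)$. For $r>0$: $U[W_s,W_c,\downarrow;r](\theta):=r\theta H^{W_s}_{1-\theta}(M)+\theta H^{W_c,\downarrow}_{1-\theta}(X|Z)$. With $w^s_\theta(m):=P_{M_1}(m)^{1-\theta}$ and $w^c_\theta(x,z):=P_{X_1Z_1}(x,z)^{1-\theta}P_{Z_1}(z)^{\theta}$: $\overline\delta_{W_s}(\theta):=\log(v_{A^s_\theta}\cdot w^s_\theta)$, $\overline\delta_{W_c}(\theta):=\log(v_{A^c_\theta}\cdot w^c_\theta)$. *)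

(* Defs.v *)
From HB Require Import structures.
From mathcomp Require Import all_boot.
From mathcomp Require Import ssralg finalg.
From Stdlib Require Import Reals ClassicalEpsilon.
Set Implicit Arguments. Unset Strict Implicit. Unset Printing Implicit Defensive.
Open Scope R_scope.

Definition fsum (T : finType) (F : T -> R) : R := \big[Rplus/R0]_(i : T) F i.

(* a^t with the convention 0^t = 0 *)
Definition rpow (a t : R) : R :=
  if Req_EM_T a 0 then 0 else Rpower a t.

(* t-step transition probability W^t(j|i): W j i is W(j|i) *)
Fixpoint tpow (T : finType) (W : T -> T -> R) (t : nat) (j i : T) : R :=
  match t with
  | O => if j == i then 1 else 0
  | S t' => fsum (fun l => W j l * tpow W t' l i)
  end.

Definition stochastic (T : finType) (W : T -> T -> R) : Prop :=
  (forall j i, 0 <= W j i) /\ (forall i, fsum (fun j => W j i) = 1).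

Definition distribution (T : finType) (P : T -> R) : Prop :=
  (forall i, 0 <= P i) /\ fsum P = 1.

Definition irreducible (T : finType) (W : T -> T -> R) : Prop :=
  forall i j : T, exists t, (1 <= t)%nat /\ 0 < tpow W t j i.

Definition aperiodic (T : finType) (W : T -> T -> R) : Prop :=
  forall (i : T) (d : nat),
    (forall t, (1 <= t)%nat -> 0 < tpow W t i i -> (d %| t)%N) -> d = 1%nat.

(* Perron-Frobenius eigenvalue and normalized positive left eigenvector
   (unique for nonnegative irreducible A, chosen by epsilon). *)
Definition is_pf_pair (T : finType) (A : T -> T -> R) (l : R) (v : T -> R) : Prop :=
  (forall i, 0 < v i) /\ (forall j, fsum (fun i => v i * A i j) = l * v j).

Definition pf_eig (T : finType) (A : T -> T -> R) : R :=
  epsilon (inhabits 0) (fun l => exists v, is_pf_pair A l v).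

Definition pf_vec (T : finType) (A : T -> T -> R) : T -> R :=
  epsilon (inhabits (fun _ => 0))
    (fun v => is_pf_pair A (pf_eig A) v /\
              (exists i, v i = 1) /\ (forall i, 1 <= v i)).

Fixpoint path_prob (T : finType) (W : T -> T -> R) (prev : T) (s : seq T) : R :=
  match s with
  | [::] => 1
  | y :: s' => W y prev * path_prob W y s'
  end.

Definition markov_prob (T : finType) (P1 : T -> R) (W : T -> T -> R) (s : seq T) : R :=
  match s with
  | [::] => 1
  | x :: s' => P1 x * path_prob W x s'
  end.

Section Channel.
Variables (M : finType) (X : finZmodType) (Z : finType).

(* W_{c,Z}(z|z') := sum_x W_c(x,z|0,z') (independent of x' under Assumption 1) *)
Definition WcZ (Wc : X * Z -> X * Z -> R) (z z' : Z) : R :=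
  fsum (fun x : X => Wc (x, z) (GRing.zero, z')).

Definition assumption1 (Wc : X * Z -> X * Z -> R) : Prop :=
  forall (z : Z) (x1 x2 : X) (z' : Z),
    fsum (fun x : X => Wc (x, z) (x1, z')) = fsum (fun x : X => Wc (x, z) (x2, z')).

Definition PZ1 (PXZ1 : X * Z -> R) (z : Z) : R := fsum (fun x : X => PXZ1 (x, z)).

Definition noise (n : nat) (y : n.-tuple (X * Z)) (xt : n.-tuple X) : n.-tuple (X * Z) :=
  [tuple ((GRing.add (tnth y i).1 (GRing.opp (tnth xt i))), (tnth y i).2) | i < n].

Definition code_error (k n : nat) (PM1 : M -> R) (Ws : M -> M -> R)
  (PXZ1 : X * Z -> R) (Wc : X * Z -> X * Z -> R)
  (e : k.-tuple M -> n.-tuple X) (d : n.-tuple (X * Z) -> k.-tuple M) : R :=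
  fsum (fun m : k.-tuple M =>
    markov_prob PM1 Ws (tval m) *
    fsum (fun y : n.-tuple (X * Z) =>
      if d y == m then 0 else markov_prob PXZ1 Wc (tval (noise y (e m))))).

Definition is_inf (E : R -> Prop) (p : R) : Prop :=
  (forall r, E r -> p <= r) /\ (forall q, (forall r, E r -> q <= r) -> q <= p).

Definition Pj (k n : nat) (PM1 : M -> R) (Ws : M -> M -> R)
  (PXZ1 : X * Z -> R) (Wc : X * Z -> X * Z -> R) : R :=
  epsilon (inhabits 0)
    (is_inf (fun r => exists (e : k.-tuple M -> n.-tuple X)
                              (d : n.-tuple (X * Z) -> k.-tuple M),
                         r = code_error PM1 Ws PXZ1 Wc e d)).

Definition As (Ws : M -> M -> R) (th : R) : M -> M -> R :=
  fun m m' => rpow (Ws m m') (1 - th).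

Definition Ac (Wc : X * Z -> X * Z -> R) (th : R) : X * Z -> X * Z -> R :=
  fun a a' => rpow (Wc a a') (1 - th) * rpow (WcZ Wc a.2 a'.2) th.

(* theta H^{W_s}_{1-theta}(M) and theta H^{W_c,down}_{1-theta}(X|Z) *)
Definition thetaHs (Ws : M -> M -> R) (th : R) : R := ln (pf_eig (As Ws th)).
Definition thetaHc (Wc : X * Z -> X * Z -> R) (th : R) : R := ln (pf_eig (Ac Wc th)).

Definition U (Ws : M -> M -> R) (Wc : X * Z -> X * Z -> R) (r th : R) : R :=
  r * thetaHs Ws th + thetaHc Wc th.

Definition delta_s (PM1 : M -> R) (Ws : M -> M -> R) (th : R) : R :=
  ln (fsum (fun m => pf_vec (As Ws th) m * rpow (PM1 m) (1 - th))).

Definition delta_c (PXZ1 : X * Z -> R) (Wc : X * Z -> X * Z -> R) (th : R) : R :=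
  ln (fsum (fun a => pf_vec (Ac Wc th) a *
                     (rpow (PXZ1 a) (1 - th) * rpow (PZ1 PXZ1 a.2) th))).

End Channel.

(* Main.v *)
Require Import Defs.
From HB Require Import structures.
From mathcomp Require Import all_boot.
From mathcomp Require Import ssralg finalg.
From Stdlib Require Import Reals ClassicalEpsilon Lra Psatz.
From mathcomp Require Import all_order all_algebra.
From mathcomp Require Import Rstruct Rstruct_topology classical_sets boolp topology normedtype derive matrix_normedtype.
Import GRing.Theory Num.Theory Order.TTheory.
Set Implicit Arguments. Unset Strict Implicit. Unset Printing Implicit Defensive.
From mathcomp Require Import ring.
Section Gen.
Local Open Scope ring_scope.

Lemma fsumE (T : finType) (F : T -> R) : fsum F = \sum_i F i.
Proof. by []. Qed.

Lemma fin_argmax (T : finType) (f : T -> R) (x0 : T) : exists m, forall x, f x <= f m.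
Proof.
case: (@arg_maxP _ R T x0 xpredT f isT) => m _ H; exists m => x; exact: H.
Qed.

Lemma sum_ge_term (T : finType) (F : T -> R) i0 :
  (forall i, 0 <= F i) -> F i0 <= \sum_i F i.
Proof.
move=> h; rewrite (bigD1 i0) //= lerDl; apply: sumr_ge0 => i _; exact: h.
Qed.

Lemma tpowS (T : finType) (W : T -> T -> R) t j i :
  tpow W t.+1 j i = \sum_l W j l * tpow W t l i.
Proof. by []. Qed.

Lemma tpow0 (T : finType) (W : T -> T -> R) j i :
  tpow W 0 j i = (j == i)%:R.
Proof. by rewrite /=; case: eqP. Qed.

Lemma tpow_ge0 (T : finType) (W : T -> T -> R) :
  (forall i j, 0 <= W i j) -> forall t i j, 0 <= tpow W t i j.
Proof.
move=> W0; elim=> [|t IH] i j; first by rewrite tpow0 ler0n.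
rewrite tpowS; apply: sumr_ge0 => l _; apply: mulr_ge0; [exact: W0| exact: IH].
Qed.

Lemma tpow_pos_mono (T : finType) (W V : T -> T -> R) :
  (forall i j, 0 <= W i j) -> (forall i j, 0 <= V i j) ->
  (forall i j, 0 < W i j -> 0 < V i j) ->
  forall t i j, 0 < tpow W t i j -> 0 < tpow V t i j.
Proof.
move=> W0 V0 WV; elim=> [|t IH] i j; first by rewrite !tpow0.
rewrite !tpowS => hp.
have [l hl]: exists l, 0 < W i l * tpow W t l j.
  apply/existsP; apply: contraTT hp => /existsPn hn.
  have h0: forall l, W i l * tpow W t l j <= 0 by move=> l; rewrite leNgt (negbTE (hn l)).
  by rewrite -leNgt (le_trans (ler_sum _ (fun l _ => h0 l))) // big1.
have : W i l * tpow W t l j != 0 by rewrite gt_eqF.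
rewrite mulf_eq0 negb_or => /andP[ha hb].
apply: (@lt_le_trans _ _ (V i l * tpow V t l j)); last first.
  apply: (@sum_ge_term T (fun l0 => V i l0 * tpow V t l0 j) l) => l0.
  apply: mulr_ge0; [exact: V0| exact: tpow_ge0].
apply: mulr_gt0; first by apply: WV; rewrite lt0r ha W0.
by apply: IH; rewrite lt0r hb tpow_ge0.
Qed.
End Gen.

Section Gen2.
Local Open Scope ring_scope.
Lemma sum_assoc (T : finType) (P Q S : T -> T -> R) i j :
  \sum_l P i l * (\sum_m Q l m * S m j) = \sum_m (\sum_l P i l * Q l m) * S m j.
Proof.
rewrite (eq_bigr (fun l => \sum_m P i l * (Q l m * S m j))); last by move=> l _; rewrite mulr_sumr.
rewrite exchange_big; apply: eq_bigr => m _; rewrite mulr_suml; apply: eq_bigr => l _; by rewrite mulrA.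
Qed.

Lemma sum_delta_l (T : finType) (P : T -> R) i : \sum_l (i == l)%:R * P l = P i.
Proof. rewrite (bigD1 i) //= eqxx mul1r big1 ?addr0 // => l hl; by rewrite eq_sym (negbTE hl) mul0r. Qed.
Lemma sum_delta_r (T : finType) (P : T -> R) j : \sum_l P l * (l == j)%:R = P j.
Proof. rewrite (bigD1 j) //= eqxx mulr1 big1 ?addr0 // => l hl; by rewrite (negbTE hl) mulr0. Qed.
End Gen2.
Section PF.
Local Open Scope ring_scope.
Variables (T : finType) (A : T -> T -> R).
Hypothesis A0 : forall i j, 0 <= A i j.

Definition IA (i j : T) : R := (i == j)%:R + A i j.
Lemma IA0 i j : 0 <= IA i j. Proof. by rewrite /IA addr_ge0. Qed.

Lemma tpow_IA_ge (Tm : nat) : forall (t : nat) i j, leq t Tm -> tpow A t i j <= tpow IA Tm i j.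
Proof.
elim: Tm => [|Tm IH] t i j.
  by rewrite leqn0 => /eqP ->.
rewrite leq_eqVlt => /orP[/eqP->|ht].
  rewrite !tpowS; apply: ler_sum => l _; apply: ler_pM.
  - exact: A0.
  - exact: tpow_ge0.
  - by rewrite /IA lerDr ler0n.
  - exact: IH.
apply: (le_trans (IH t i j ht)); rewrite tpowS.
rewrite (eq_bigr (fun l => (i == l)%:R * tpow IA Tm l j + A i l * tpow IA Tm l j)); last first.
  by move=> l _; rewrite /IA mulrDl.
rewrite big_split /= sum_delta_l lerDl; apply: sumr_ge0 => l _; apply: mulr_ge0 => //.
exact: (tpow_ge0 IA0).
Qed.

Lemma comm_tpow (W : T -> T -> R) :
  (forall i j, \sum_l A i l * W l j = \sum_l W i l * A l j) ->
  forall t i j, \sum_l A i l * tpow W t l j = \sum_l tpow W t i l * A l j.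
Proof.
move=> hW; elim=> [|t IH] i j.
  under eq_bigr do rewrite tpow0. under [RHS]eq_bigr do rewrite tpow0.
  by rewrite sum_delta_r sum_delta_l.
rewrite (eq_bigr (fun l => A i l * \sum_m W l m * tpow W t m j)) //.
rewrite sum_assoc.
transitivity (\sum_m (\sum_l W i l * A l m) * tpow W t m j).
  by apply: eq_bigr => m _; rewrite hW.
rewrite -sum_assoc.
transitivity (\sum_l W i l * \sum_m tpow W t l m * A m j).
  by apply: eq_bigr => l _; rewrite IH.
rewrite sum_assoc; apply: eq_bigr => m _; by rewrite tpowS.
Qed.

Hypothesis Airr : forall i j, exists t, 0 < tpow A t i j.

Definition tf (p : T * T) : nat := proj1_sig (cid (Airr p.1 p.2)).
Lemma tfP p : 0 < tpow A (tf p) p.1 p.2.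
Proof. exact: proj2_sig (cid (Airr p.1 p.2)). Qed.
Definition Tm := (\max_(p : T * T) tf p)%N.
Definition B := tpow IA Tm.
Lemma B0 i j : 0 <= B i j. Proof. exact: (tpow_ge0 IA0). Qed.
Lemma Bpos i j : 0 < B i j.
Proof. apply: (lt_le_trans (tfP (i,j))); apply: tpow_IA_ge; exact: (leq_bigmax (i,j)). Qed.

Lemma AB_comm i j : \sum_l A i l * B l j = \sum_l B i l * A l j.
Proof.
apply: comm_tpow => i' j'; rewrite /IA.
under eq_bigr do rewrite mulrDr. under [RHS]eq_bigr do rewrite mulrDl.
by rewrite !big_split /= sum_delta_r sum_delta_l.
Qed.


Local Open Scope classical_set_scope.
Local Notation rvT := 'rV[R]_(#|T|).+1.

Definition xw (w : rvT) (i : T) : R := w ord0 (lift ord_max (enum_rank i)).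
Definition tw (w : rvT) : R := w ord0 ord_max.
Definition yB (w : rvT) (j : T) : R := \sum_i xw w i * B i j.
Definition gj (j : T) (w : rvT) : R := \sum_l yB w l * A l j - tw w * yB w j.
Definition C0 : R := \sum_l \sum_j A l j.
Definition CC : R := C0 + 1.
Definition box := [set w : rvT | forall i, w ord0 i \in `[0, CC]%R].
Definition Kset := box `&` ([set w : rvT | \sum_i xw w i = 1] `&` [set w : rvT | forall j, 0 <= gj j w]).

Lemma C0_ge0 : 0 <= C0.
Proof. apply: sumr_ge0 => l _; apply: sumr_ge0 => j _; exact: A0. Qed.

Lemma cont_add (f g : rvT -> R^o) : continuous f -> continuous g -> continuous (fun w => f w + g w).
Proof. move=> hf hg w; have H := continuousD (hf w) (hg w); exact H. Qed.
Lemma cont_sub (f g : rvT -> R^o) : continuous f -> continuous g -> continuous (fun w => f w - g w).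
Proof. move=> hf hg w; have H := continuousB (hf w) (hg w); exact H. Qed.
Lemma cont_mul (f g : rvT -> R^o) : continuous f -> continuous g -> continuous (fun w => f w * g w).
Proof. move=> hf hg w; have H := continuousM (hf w) (hg w); exact H. Qed.
Lemma cont_cst (c : R) : continuous (fun _ : rvT => (c : R^o)).
Proof. exact: cst_continuous. Qed.
Lemma cont_sum (I : finType) (F : I -> rvT -> R^o) :
  (forall i, continuous (F i)) -> continuous (fun w => \sum_i F i w).
Proof.
move=> h; have: forall s : seq I, continuous (fun w => \sum_(i <- s) F i w).
  elim=> [|a s IH].
    have ->: (fun w : rvT => \sum_(i <- [::]) F i w) = (fun _ => 0).
      by apply: funext => w; rewrite big_nil.
    exact: cont_cst.
  have ->: (fun w : rvT => \sum_(i <- a :: s) F i w) = (fun w => F a w + \sum_(i <- s) F i w).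
    by apply: funext => w; rewrite big_cons.
  exact: cont_add.
by apply.
Qed.

Lemma cont_xw i : continuous (fun w => (xw w i : R^o)).
Proof. exact: coord_continuous. Qed.
Lemma cont_tw : continuous (fun w => (tw w : R^o)).
Proof. exact: coord_continuous. Qed.
Lemma cont_yB j : continuous (fun w => (yB w j : R^o)).
Proof. apply: cont_sum => i; apply: cont_mul; [exact: cont_xw | exact: cont_cst]. Qed.
Lemma cont_gj j : continuous (fun w => (gj j w : R^o)).
Proof.
apply: cont_sub; first by apply: cont_sum => l; apply: cont_mul; [exact: cont_yB|exact: cont_cst].
apply: cont_mul; [exact: cont_tw | exact: cont_yB].
Qed.

Lemma box_compact : compact box.
Proof. have h := (rV_compact (fun _ : 'I_(#|T|).+1 => @segment_compact _ (0:R) CC)). exact h. Qed.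

Lemma closed_sum1 : closed [set w : rvT | \sum_i xw w i = 1].
Proof.
have hc : continuous (fun w : rvT => (\sum_i xw w i : R^o)) by apply: cont_sum => i; exact: cont_xw.
have h := @preimage_closed rvT R (fun w => \sum_i xw w i) [set x | x = 1].
apply: h; [move=> w _; exact (hc w) | exact: closed_eq].
Qed.

Lemma closed_g : closed [set w : rvT | forall j, 0 <= gj j w].
Proof.
have ->: [set w : rvT | forall j, 0 <= gj j w] = \bigcap_(j in setT) ((gj j) @^-1` [set x | 0 <= x]).
  by apply/seteqP; split => [w hw j _ | w hw j]; [exact: hw | exact: hw].
apply: closed_bigI => j _.
have h := @preimage_closed rvT R (gj j) [set x | 0 <= x].
apply: h; [move=> w _; exact (@cont_gj j w) | exact: closed_ge].
Qed.

Lemma Kset_compact : compact Kset.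
Proof. exact: (compact_closedI box_compact (closedI closed_sum1 closed_g)). Qed.

Lemma t_bound (y : T -> R) t : (forall l, 0 <= y l) -> 0 < \sum_j y j ->
  (forall j, t * y j <= \sum_l y l * A l j) -> t <= C0.
Proof.
move=> y0 Sp h.
have h1: t * \sum_j y j <= C0 * \sum_j y j.
  rewrite mulr_sumr; apply: (le_trans (ler_sum _ (fun j _ => h j))).
  rewrite exchange_big /= mulr_sumr; apply: ler_sum => l _.
  rewrite -mulr_sumr mulrC; apply: ler_wpM2r; first exact: y0.
  apply: (@sum_ge_term T (fun l' => \sum_j A l' j) l) => l'.
  by apply: sumr_ge0 => j _; exact: A0.
by rewrite -(ler_pM2r Sp).
Qed.

Definition mkrow (t : R) (x : T -> R) : rvT :=
  \row_(k < #|T|.+1) match unlift ord_max k with None => t | Some k' => x (enum_val k') end.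
Lemma xw_mkrow t x i : xw (mkrow t x) i = x i.
Proof. by rewrite /xw /mkrow mxE liftK enum_rankK. Qed.
Lemma tw_mkrow t x : tw (mkrow t x) = t.
Proof. by rewrite /tw /mkrow mxE unlift_none. Qed.

Lemma Kset_mkrow t x :
  0 <= t <= CC -> (forall i, 0 <= x i <= CC) -> \sum_i x i = 1 ->
  (forall j, t * (\sum_i x i * B i j) <= \sum_l (\sum_i x i * B i l) * A l j) ->
  Kset (mkrow t x).
Proof.
move=> ht hx hs hg; split; [|split].
- move=> k; rewrite /mkrow mxE in_itv /=; case: (unlift ord_max k) => [k'|] //.
- change (\sum_i xw (mkrow t x) i = 1); rewrite -hs; apply: eq_bigr => i _; exact: xw_mkrow.
- change (forall j, 0 <= gj j (mkrow t x)); move=> j; rewrite /gj /yB tw_mkrow subr_ge0.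
  have -> : xw (mkrow t x) = x by apply: funext => i; exact: xw_mkrow.
  exact: hg.
Qed.

Lemma pf_main (i0 : T) : exists l (v : T -> R), (forall i, 0 < v i) /\ forall j, \sum_i v i * A i j = l * v j.
Proof.
have CC1 : 1 <= CC by rewrite /CC lerDr C0_ge0.
have Kne : Kset !=set0.
  exists (mkrow 0 (fun i => (i == i0)%:R)).
  apply: Kset_mkrow.
  - by rewrite lexx /= (le_trans ler01 CC1).
  - move=> i; rewrite ler0n /=; case: (i == i0); [exact: CC1 | exact: (le_trans ler01 CC1)].
  - by rewrite (bigD1 i0) //= eqxx big1 ?addr0 // => i /negbTE ->.
  - move=> j; rewrite mul0r; apply: sumr_ge0 => l _; apply: mulr_ge0 => //.
    apply: sumr_ge0 => i _; apply: mulr_ge0; [exact: ler0n | exact: B0].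
have [c cK cmax] := EVT_max_rV Kne Kset_compact (continuous_subspaceT cont_tw).
move: cK; rewrite in_setE => -[cbox [csum cg]].
have x0 : forall i, 0 <= xw c i.
  by move=> i; move: (cbox (lift ord_max (enum_rank i))); rewrite in_itv /= => /andP[].
have ts0 : 0 <= tw c by move: (cbox ord_max); rewrite in_itv /= => /andP[].
set ts := tw c.
set y := yB c.
have ypos : forall j, 0 < y j.
  move=> j.
  have [i hi] : exists i, 0 < xw c i.
    case: (boolP [exists i, 0 < xw c i]) => [/existsP //| /existsPn hn].
    have hle : forall i, xw c i <= 0 by move=> i; rewrite leNgt (negbTE (hn i)).
    have : \sum_i xw c i <= 0.
      by apply: (le_trans (ler_sum _ (fun i _ => hle i))); rewrite big1_eq.
    by move: csum; rewrite /mkset => ->; rewrite ler10.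
  apply: (lt_le_trans _ (@sum_ge_term T (fun i => xw c i * B i j) i _)).
    exact: mulr_gt0 hi (Bpos i j).
  move=> i'; apply: mulr_ge0; [exact: x0 | exact: B0].
have hcon : forall j, ts * y j <= \sum_l y l * A l j.
  by move=> j; move: (cg j); rewrite /gj subr_ge0.
have hall: forall j, \sum_l y l * A l j <= ts * y j.
  move=> j0; rewrite leNgt; apply/negP => hj0.
  pose y' j := \sum_l y l * B l j.
  have key : forall j, \sum_m y' m * A m j - ts * y' j
                       = \sum_l (\sum_m y m * A m l - ts * y l) * B l j.
    move=> j.
    have e1 := sum_assoc (fun _ m => y m) B A j j; simpl in e1.
    have e2 := sum_assoc (fun _ m => y m) A B j j; simpl in e2.
    rewrite -e1.
    rewrite (eq_bigr (fun l => y l * \sum_m A l m * B m j)); last first.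
      by move=> l _; rewrite AB_comm.
    rewrite e2 /y' mulr_sumr -sumrB; apply: eq_bigr => l _.
    by rewrite mulrBl mulrA.
  have zpos : forall j, 0 < \sum_l (\sum_m y m * A m l - ts * y l) * B l j.
    move=> j.
    apply: (lt_le_trans _ (@sum_ge_term T (fun l => (\sum_m y m * A m l - ts * y l) * B l j) j0 _)).
      by apply: mulr_gt0; [rewrite subr_gt0 | exact: Bpos].
    move=> l; apply: mulr_ge0; [by rewrite subr_ge0 | exact: B0].
  have y'pos : forall j, 0 < y' j.
    move=> j; apply: (lt_le_trans _ (@sum_ge_term T (fun l => y l * B l j) i0 _)).
      exact: mulr_gt0 (ypos i0) (Bpos i0 j).
    move=> l; apply: mulr_ge0; [exact: ltW | exact: B0].
  have hy' : forall j, ts * y' j < \sum_m y' m * A m j.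
    by move=> j; rewrite -subr_gt0 key zpos.
  pose r j := (\sum_m y' m * A m j) / y' j.
  have [j1 hj1] := fin_argmax (fun j => - r j) i0.
  have rmin : forall j, r j1 <= r j by move=> j; rewrite -lerN2; exact: hj1.
  have ht'c : forall j, r j1 * y' j <= \sum_m y' m * A m j.
    by move=> j; rewrite -ler_pdivlMr //; exact: rmin.
  have tsl : ts < r j1 by rewrite /r ltr_pdivlMr //; exact: hy'.
  pose S := \sum_j y j.
  have Spos : 0 < S.
    apply: (lt_le_trans (ypos i0) (@sum_ge_term T y i0 _)) => l; exact: ltW.
  have t'C0 : r j1 <= C0.
    apply: (t_bound (fun l => ltW (y'pos l))) => //.
    apply: (lt_le_trans (y'pos i0) (@sum_ge_term T y' i0 _)) => l; exact: ltW.
  have helper : forall j, \sum_i y i / S * B i j = y' j / S.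
    by move=> j; rewrite /y' mulr_suml; apply: eq_bigr => i _; rewrite mulrAC.
  have : Kset (mkrow (r j1) (fun i => y i / S)).
    apply: Kset_mkrow.
    - apply/andP; split; first exact: (le_trans ts0 (ltW tsl)).
      by apply: (le_trans t'C0); rewrite /CC lerDl.
    - move=> i; apply/andP; split; first by apply: divr_ge0; [exact: ltW | exact: ltW].
      apply: (le_trans _ CC1); rewrite ler_pdivrMr // mul1r.
      apply: (@sum_ge_term T y i) => l; exact: ltW.
    - by rewrite -mulr_suml divff // gt_eqF.
    - move=> j; rewrite helper.
      under eq_bigr do rewrite helper.
      rewrite mulrA.
      rewrite (eq_bigr (fun l => y' l * A l j / S)); last by move=> l _; rewrite mulrAC.
      rewrite -mulr_suml ler_pM2r ?invr_gt0 //; exact: ht'c.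
  move=> /(fun h => cmax _ (mem_set h)); rewrite tw_mkrow => hle.
  by move: (lt_le_trans tsl hle); rewrite ltxx.
exists ts, y; split; first exact: ypos.
by move=> j; apply/eqP; rewrite eq_le hall hcon.
Qed.

End PF.

Lemma pf_exists (T : finType) (A : T -> T -> R) :
  (forall i j, (0 <= A i j)%R) -> (forall i j, exists t, (0 < tpow A t i j)%R) ->
  exists l v, is_pf_pair A l v.
Proof.
move=> A0 Airr.
case: (pickP (@predT T)) => [i0 _ | hT]; last first.
  by exists 0, (fun _ => 1); split=> i; move: (hT i).
have [l [v [vp ve]]] := pf_main A0 Airr i0.
exists l, v; split => i; first by apply/RltP; exact: vp.
exact: ve.
Qed.

Section Rp.
Local Open Scope R_scope.

Lemma exp_mono x y : x <= y -> exp x <= exp y.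
Proof. case=> h; [left; exact: exp_increasing | right; by rewrite h]. Qed.
Lemma ln_mono x y : 0 < x -> x <= y -> ln x <= ln y.
Proof. move=> hx; case=> h; [left; exact: ln_increasing | right; by rewrite h]. Qed.

Lemma rpow0 t : rpow 0 t = 0.
Proof. unfold rpow; destruct (Req_dec_T 0 0) as [e|h]. reflexivity. exfalso; apply: h; reflexivity. Qed.

Lemma rpow_pos a t : 0 < a -> rpow a t = exp (t * ln a).
Proof. move=> ha; rewrite /rpow; destruct (Req_dec_T a 0) as [e|h]; simpl; [|by []]. exfalso; rewrite e in ha; exact: (Rlt_irrefl 0 ha). Qed.

Lemma rpow_ge0 a t : 0 <= rpow a t.
Proof. rewrite /rpow; destruct (Req_dec_T a 0) as [e|h]; simpl; [lra|left; exact: exp_pos]. Qed.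

Lemma rpow_gt0 a t : 0 < a -> 0 < rpow a t.
Proof. move=> ha; rewrite rpow_pos //; exact: exp_pos. Qed.

Lemma rpow1 t : rpow 1 t = 1.
Proof. rewrite rpow_pos; last lra. by rewrite ln_1 Rmult_0_r exp_0. Qed.

Lemma rpowM a b t : 0 <= a -> 0 <= b -> rpow (a * b) t = rpow a t * rpow b t.
Proof.
move=> ha hb.
case: (Req_dec a 0) => [->|ha']; first by rewrite Rmult_0_l !rpow0 Rmult_0_l.
case: (Req_dec b 0) => [->|hb']; first by rewrite Rmult_0_r !rpow0 Rmult_0_r.
have ha2 : 0 < a by lra.
have hb2 : 0 < b by lra.
rewrite !rpow_pos //; last exact: Rmult_lt_0_compat.
by rewrite ln_mult // Rmult_plus_distr_l exp_plus.
Qed.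

Lemma key_ineq p Xv b s : 0 <= p -> 0 <= Xv <= 1 -> p * Xv <= b -> 0 < s < 1 ->
  p * Xv <= rpow p (1 - s) * rpow b s.
Proof.
move=> hp hX hb hs.
case: (Req_dec p 0) => [->|hp'].
  rewrite Rmult_0_l; apply: Rmult_le_pos; exact: rpow_ge0.
case: (Req_dec Xv 0) => [->|hX'].
  rewrite Rmult_0_r; apply: Rmult_le_pos; exact: rpow_ge0.
have hp2 : 0 < p by lra.
have hX2 : 0 < Xv by lra.
have hpX : 0 < p * Xv by exact: Rmult_lt_0_compat.
have hb2 : 0 < b by lra.
rewrite !rpow_pos // -exp_plus.
rewrite -{1}(exp_ln (p * Xv) hpX) ln_mult //.
apply: exp_mono.
have h1 : ln p + ln Xv <= ln b by rewrite -ln_mult //; exact: ln_mono.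
have h2 : ln Xv <= ln 1 by apply: ln_mono => //; lra.
rewrite ln_1 in h2.
nra.
Qed.

End Rp.

Section Tup.
Local Open Scope ring_scope.

Lemma sum_tuple_cons (T : finType) n (F : n.+1.-tuple T -> R) :
  \sum_(t : n.+1.-tuple T) F t = \sum_(x : T) \sum_(t : n.-tuple T) F [tuple of x :: t].
Proof.
rewrite pair_big /=.
rewrite (reindex (fun p : T * n.-tuple T => [tuple of p.1 :: p.2])) /=.
  by apply: eq_bigr => -[x t] _.
exists (fun t : n.+1.-tuple T => (thead t, [tuple of behead t])).
  by move=> [x t] _ /=; congr pair; apply: val_inj.
by move=> t _; apply: val_inj => /=; rewrite [in RHS](tuple_eta t).
Qed.

Lemma sum_tuple0 (T : finType) (F : 0.-tuple T -> R) : \sum_(t : 0.-tuple T) F t = F [tuple].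
Proof. by rewrite (big_pred1 [tuple]) // => t; apply/esym/eqP; exact: tuple0. Qed.

Lemma tval0 (T : Type) (t : 0.-tuple T) : tval t = [::].
Proof. by case: t => -[]. Qed.

Lemma path_prob_ge0 (T : finType) (W : T -> T -> R) :
  (forall i j, 0 <= W i j) -> forall s prev, 0 <= path_prob W prev s.
Proof. move=> W0; elim=> [|y s IH] prev /=; [exact: ler01 | exact: mulr_ge0]. Qed.

Lemma markov_prob_ge0 (T : finType) (P1 : T -> R) (W : T -> T -> R) :
  (forall i, 0 <= P1 i) -> (forall i j, 0 <= W i j) -> forall s, 0 <= markov_prob P1 W s.
Proof. move=> P0 W0 [|x s] /=; [exact: ler01 | apply: mulr_ge0 => //; exact: path_prob_ge0]. Qed.

Lemma sum_path_prob (T : finType) (W : T -> T -> R) :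
  (forall i, \sum_j W j i = 1) -> forall n prev, \sum_(t : n.-tuple T) path_prob W prev t = 1.
Proof.
move=> hW; elim=> [|n IH] prev; first by rewrite sum_tuple0.
rewrite sum_tuple_cons -(hW prev); apply: eq_bigr => x _.
by rewrite /= -mulr_sumr IH mulr1.
Qed.

Lemma sum_markov_prob (T : finType) (P1 : T -> R) (W : T -> T -> R) :
  \sum_i P1 i = 1 -> (forall i, \sum_j W j i = 1) -> forall n, \sum_(t : n.+1.-tuple T) markov_prob P1 W t = 1.
Proof.
move=> hP hW n; rewrite sum_tuple_cons -hP; apply: eq_bigr => x _.
by rewrite /= -mulr_sumr sum_path_prob // mulr1.
Qed.

Lemma path_bound (T : finType) (A : T -> T -> R) (l : R) (v : T -> R) (h : T -> seq T -> R) :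
  (forall i j, 0 <= A i j) -> (forall i, 1 <= v i) -> (forall j, \sum_i v i * A i j = l * v j) ->
  (forall prev, h prev [::] = 1) -> (forall prev y s, h prev (y :: s) = A y prev * h y s) ->
  forall n prev, \sum_(t : n.-tuple T) h prev t <= l ^+ n * v prev.
Proof.
move=> A0 v1 ve h0 hS; elim=> [|n IH] prev.
  by rewrite sum_tuple0 /= h0 expr0 mul1r.
rewrite sum_tuple_cons.
have e : forall x, \sum_(t : n.-tuple T) h prev [tuple of x :: t] = A x prev * \sum_(t : n.-tuple T) h x t.
  by move=> x; rewrite mulr_sumr; apply: eq_bigr => t _; exact: hS.
rewrite (eq_bigr _ (fun x _ => e x)).
apply: (@le_trans _ _ (\sum_x A x prev * (l ^+ n * v x))).
  by apply: ler_sum => x _; apply: ler_wpM2l; [exact: A0 | exact: IH].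
rewrite (eq_bigr (fun x => l ^+ n * (v x * A x prev))); last first.
  by move=> x _; rewrite mulrCA (mulrC (A x prev)).
by rewrite -mulr_sumr ve exprS mulrA (mulrC (l ^+ n)).
Qed.

End Tup.

Section Coding.
Local Open Scope ring_scope.
Variables (X : finZmodType) (Z : finType).

Definition unnoise n (w : n.-tuple (X * Z)) (a : n.-tuple X) : n.-tuple (X * Z) :=
  [tuple ((tnth w i).1 + tnth a i, (tnth w i).2) | i < n].
Definition tsub n (a b : n.-tuple X) : n.-tuple X := [tuple tnth a i - tnth b i | i < n].
Definition tadd n (a b : n.-tuple X) : n.-tuple X := [tuple tnth a i + tnth b i | i < n].

Lemma noise_unnoise n (w : n.-tuple (X * Z)) a : noise (unnoise w a) a = w.
Proof.
apply: eq_from_tnth => i; rewrite /noise /unnoise !tnth_mktuple /= addrK.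
by case: (tnth w i).
Qed.

Lemma unnoise_noise n (y : n.-tuple (X * Z)) a : unnoise (noise y a) a = y.
Proof.
apply: eq_from_tnth => i; rewrite /noise /unnoise !tnth_mktuple /= addrNK.
by case: (tnth y i).
Qed.

Lemma noise_unnoise2 n (w : n.-tuple (X * Z)) a b : noise (unnoise w a) b = unnoise w (tsub a b).
Proof.
by apply: eq_from_tnth => i; rewrite /noise /unnoise /tsub !tnth_mktuple /= addrA.
Qed.

Lemma unnoise_cons n (w : n.-tuple (X * Z)) (t : n.-tuple X) (b : X * Z) (x : X) :
  unnoise [tuple of b :: w] [tuple of x :: t] = [tuple of (b.1 + x, b.2) :: unnoise w t].
Proof.
apply: eq_from_tnth => i; case: (unliftP ord0 i) => [j ->|->].
  by rewrite tnthS /unnoise !tnth_mktuple !tnthS.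
by rewrite tnth0 /unnoise !tnth_mktuple !tnth0.
Qed.

Lemma tsub_tadd n (a b u : n.-tuple X) : tsub a (tadd b u) = tsub (tsub a b) u.
Proof. by apply: eq_from_tnth => i; rewrite /tsub /tadd !tnth_mktuple opprD addrA. Qed.

Lemma tsubK n (c u : n.-tuple X) : tsub c (tsub c u) = u.
Proof. by apply: eq_from_tnth => i; rewrite /tsub !tnth_mktuple opprB addrC subrK. Qed.

Lemma tsub_inj n (c : n.-tuple X) : injective (tsub c).
Proof. exact: (can_inj (tsubK c)). Qed.

Lemma taddK n (b u : n.-tuple X) : tadd (tadd b u) (tsub (tadd b u) (tadd b u)) = tadd b u.
Proof. by apply: eq_from_tnth => i; rewrite /tsub /tadd !tnth_mktuple subrr addr0. Qed.

Lemma tadd_subK n (b u : n.-tuple X) : tadd (tadd b u) [tuple - tnth u i | i < n] = b.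
Proof. by apply: eq_from_tnth => i; rewrite /tadd !tnth_mktuple addrK. Qed.

Lemma path_marg (Wc : X * Z -> X * Z -> R) : assumption1 Wc ->
  forall n (a : X * Z) (w : n.-tuple (X * Z)),
  \sum_(t : n.-tuple X) path_prob Wc a (unnoise w t) = path_prob (WcZ Wc) a.2 [seq p.2 | p <- w].
Proof.
move=> hA; elim=> [|n IH] a w.
  by rewrite sum_tuple0 tval0 (tval0 w).
case/tupleP: w => b w.
rewrite sum_tuple_cons.
transitivity (\sum_x Wc (b.1 + x, b.2) a * path_prob (WcZ Wc) b.2 [seq p.2 | p <- w]).
  apply: eq_bigr => x _.
  rewrite (eq_bigr (fun t => Wc (b.1 + x, b.2) a * path_prob Wc (b.1 + x, b.2) (unnoise w t))).
    by rewrite -mulr_sumr IH.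
  by move=> t _; rewrite unnoise_cons.
rewrite -mulr_suml /=; congr (_ * _).
transitivity (\sum_y Wc (y, b.2) a); first by rewrite [RHS](reindex_inj (addrI b.1)).
case: a => a1 a2 /=; rewrite /WcZ (hA b.2 0 a1 a2).
by [].
Qed.

Lemma Q_eq (PXZ1 : X * Z -> R) (Wc : X * Z -> X * Z -> R) : assumption1 Wc ->
  forall n (w : n.+1.-tuple (X * Z)),
  \sum_(t : n.+1.-tuple X) markov_prob PXZ1 Wc (unnoise w t)
    = markov_prob (PZ1 PXZ1) (WcZ Wc) [seq p.2 | p <- w].
Proof.
move=> hA n w; case/tupleP: w => b w.
rewrite sum_tuple_cons.
transitivity (\sum_x PXZ1 (b.1 + x, b.2) * path_prob (WcZ Wc) b.2 [seq p.2 | p <- w]).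
  apply: eq_bigr => x _.
  rewrite (eq_bigr (fun t => PXZ1 (b.1 + x, b.2) * path_prob Wc (b.1 + x, b.2) (unnoise w t))).
    by rewrite -mulr_sumr path_marg.
  by move=> t _; rewrite unnoise_cons.
rewrite -mulr_suml /=; congr (_ * _).
by rewrite [RHS](reindex_inj (addrI b.1)).
Qed.

End Coding.

Section Avg.
Local Open Scope ring_scope.
Variables (X : finZmodType) (K : finType) (n : nat).

Lemma ffun_avg (G : n.-tuple X -> R) (a b : K) : a != b ->
  (\sum_(e : {ffun K -> n.-tuple X}) G (tsub (e a) (e b))) * #|{: n.-tuple X}|%:R
  = #|{: {ffun K -> n.-tuple X}}|%:R * \sum_(t : n.-tuple X) G t.
Proof.
move=> hab.
set S := \sum_(e : {ffun K -> n.-tuple X}) G (tsub (e a) (e b)).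
have hu : forall u : n.-tuple X, S = \sum_(e : {ffun K -> n.-tuple X}) G (tsub (e a) (tadd (e b) u)).
  move=> u.
  pose phi (e : {ffun K -> n.-tuple X}) := [ffun k => if k == b then tadd (e k) u else e k].
  have phi_inj : injective phi.
    move=> e1 e2 h; apply/ffunP => k; have := congr1 (fun f : {ffun K -> n.-tuple X} => f k) h.
    rewrite /phi !ffunE; case: (k == b) => // hh.
    by rewrite -(tadd_subK (e1 k) u) hh tadd_subK.
  rewrite /S (reindex_inj phi_inj) /=; apply: eq_bigr => e _.
  by rewrite /phi !ffunE eqxx (negbTE hab).
rewrite mulr_natr -sumr_const.
rewrite (eq_bigr _ (fun u _ => hu u)) exchange_big /=.
rewrite (eq_bigr (fun e => \sum_(t : n.-tuple X) G t)); last first.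
  move=> e _; under eq_bigr do rewrite tsub_tadd.
  by rewrite [RHS](reindex_inj (@tsub_inj X n (tsub (e a) (e b)))).
by rewrite sumr_const mulr_natl.
Qed.
End Avg.

Section RC.
Local Open Scope ring_scope.
Variables (M : finType) (X : finZmodType) (Z : finType).
Variables (PM1 : M -> R) (Ws : M -> M -> R) (PXZ1 : X * Z -> R) (Wc : X * Z -> X * Z -> R).
Hypothesis PM0 : forall m, 0 <= PM1 m.
Hypothesis Ws0 : forall i j, 0 <= Ws i j.
Hypothesis PXZ0 : forall a, 0 <= PXZ1 a.
Hypothesis Wc0 : forall i j, 0 <= Wc i j.
Hypothesis hPM : \sum_m PM1 m = 1.
Hypothesis hWs : forall i, \sum_j Ws j i = 1.
Variables (k n : nat) (s : R) (m0 : M).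
Hypothesis hs0 : 0 < s.
Hypothesis hs1 : s < 1.

Local Notation Kt := (k.+1.-tuple M).
Local Notation Tt := (n.+1.-tuple X).
Local Notation Yt := (n.+1.-tuple (X * Z)).
Local Notation Et := {ffun Kt -> Tt}.

Definition Pm (m : Kt) := markov_prob PM1 Ws m.
Definition PN (w : Yt) := markov_prob PXZ1 Wc w.
Definition Qw (w : Yt) := \sum_(t : Tt) PN (unnoise w t).
Definition score (e : Et) (y : Yt) (m : Kt) := Pm m * PN (noise y (e m)).
Definition mt0 : Kt := [tuple m0 | i < k.+1].
Definition dec (e : Et) (y : Yt) : Kt :=
  epsilon (inhabits mt0) (fun m => forall m', score e y m' <= score e y m).

Lemma Pm0 m : 0 <= Pm m. Proof. exact: markov_prob_ge0. Qed.
Lemma PN0 w : 0 <= PN w. Proof. exact: markov_prob_ge0. Qed.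
Lemma Qw0 w : 0 <= Qw w. Proof. apply: sumr_ge0 => t _; exact: PN0. Qed.
Lemma sumPm : \sum_m Pm m = 1. Proof. exact: sum_markov_prob. Qed.

Lemma dec_spec e y m' : score e y m' <= score e y (dec e y).
Proof.
have [m hm] := fin_argmax (score e y) mt0.
have H := epsilon_spec (inhabits mt0) (fun m => forall m', score e y m' <= score e y m) (ex_intro _ m hm).
exact: H m'.
Qed.

Lemma ind_bound e m w :
  Pm m * PN w * (dec e (unnoise w (e m)) != m)%:R
  <= \sum_(m' | m' != m) Pm m' * PN (unnoise w (tsub (e m) (e m'))).
Proof.
set y := unnoise w (e m).
have hs : 0 <= \sum_(m' | m' != m) Pm m' * PN (unnoise w (tsub (e m) (e m'))).
  by apply: sumr_ge0 => m' _; apply: mulr_ge0; [exact: Pm0 | exact: PN0].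
case hd: (dec e y == m); first by rewrite /= mulr0.
rewrite /= mulr1.
have hne : dec e y != m by rewrite hd.
apply: (@le_trans _ _ (Pm (dec e y) * PN (unnoise w (tsub (e m) (e (dec e y)))))).
  by have := dec_spec e y m; rewrite /score /y noise_unnoise noise_unnoise2.
rewrite (bigD1 (dec e y)) //= lerDl; apply: sumr_ge0 => m' _.
by apply: mulr_ge0; [exact: Pm0 | exact: PN0].
Qed.

Lemma NT_gt0 : 0 < #|{: Tt}|%:R :> R.
Proof. rewrite ltr0n; apply/card_gt0P; by exists [tuple 0 | i < n.+1]. Qed.
Lemma NE_gt0 : 0 < #|{: Et}|%:R :> R.
Proof. rewrite ltr0n; apply/card_gt0P; by exists [ffun _ => [tuple 0 | i < n.+1]]. Qed.

Lemma e_bound m w :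
  Pm m * PN w * (\sum_(e : Et) (dec e (unnoise w (e m)) != m)%:R)
  <= #|{: Et}|%:R / #|{: Tt}|%:R * Qw w.
Proof.
rewrite mulr_sumr.
apply: (le_trans (ler_sum _ (fun e _ => ind_bound e m w))).
rewrite exchange_big /=.
have avg : forall m', m' != m -> \sum_(e : Et) PN (unnoise w (tsub (e m) (e m')))
                        = #|{: Et}|%:R / #|{: Tt}|%:R * Qw w.
  move=> m' hm'.
  have h := @ffun_avg X Kt n.+1 (fun t => PN (unnoise w t)) m m'.
  rewrite eq_sym in h; have {}h := h hm'.
  by rewrite -[LHS](mulfK (lt0r_neq0 NT_gt0)) h mulrAC.
rewrite (eq_bigr (fun m' => Pm m' * (#|{: Et}|%:R / #|{: Tt}|%:R * Qw w))); last first.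
  by move=> m' hm'; rewrite -mulr_sumr avg.
rewrite -mulr_suml -[X in _ <= X]mul1r; apply: ler_wpM2r.
  apply: mulr_ge0; last exact: Qw0.
  by apply: divr_ge0; apply: ltW; [exact: NE_gt0 | exact: NT_gt0].
rewrite -sumPm [X in _ <= X](bigID (fun m' => m' != m)) /= lerDl.
by apply: sumr_ge0 => m' _; exact: Pm0.
Qed.


Lemma pm_bound m w :
  Pm m * PN w * (\sum_(e : Et) (dec e (unnoise w (e m)) != m)%:R)
  <= #|{: Et}|%:R * (rpow (Pm m * PN w) (Rminus (IZR 1) s) * rpow (Qw w / #|{: Tt}|%:R) s).
Proof.
set p := Pm m * PN w.
set I := \sum_(e : Et) _.
set NE := #|{: Et}|%:R.
set NT := #|{: Tt}|%:R.
have NE0 : 0 < NE := NE_gt0.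
have NT0 : 0 < NT := NT_gt0.
have p0 : 0 <= p by apply: mulr_ge0; [exact: Pm0 | exact: PN0].
have I0 : 0 <= I by apply: sumr_ge0 => e _; exact: ler0n.
have IN : I <= NE.
  rewrite /NE -sumr_const; apply: ler_sum => e _; rewrite lern1; exact: leq_b1.
have hpX : p * (I / NE) <= Qw w / NT.
  have := e_bound m w; rewrite -/p -/I -/NE -/NT => h.
  rewrite mulrA ler_pdivrMr //.
  have -> : Qw w / NT * NE = NE / NT * Qw w by ring.
  exact: h.
have hk : (p * (I / NE) <= rpow p (Rminus (IZR 1) s) * rpow (Qw w / NT) s)%R.
  apply/RleP; apply: key_ineq.
  - exact/RleP.
  - split; apply/RleP; first by apply: divr_ge0 => //; exact: ltW.
    by rewrite ler_pdivrMr // mul1r.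
  - exact/RleP.
  - by split; apply/RltP.
have -> : p * I = NE * (p * (I / NE)).
  by field; exact: lt0r_neq0.
apply: ler_wpM2l; first exact: ltW.
exact: hk.
Qed.

Lemma ce_eq (e : Et) (d : Yt -> Kt) :
  code_error PM1 Ws PXZ1 Wc e d = \sum_(m : Kt) \sum_(w : Yt) Pm m * PN w * (d (unnoise w (e m)) != m)%:R.
Proof.
rewrite /code_error fsumE; apply: eq_bigr => m _.
rewrite fsumE RmultE mulr_sumr.
rewrite (reindex (fun w => unnoise w (e m))); last first.
  by exists (fun y => noise y (e m)) => y _; [exact: noise_unnoise | exact: unnoise_noise].
apply: eq_bigr => w _; rewrite noise_unnoise.
by case: (d (unnoise w (e m)) == m) => /=; rewrite ?mulr0 ?mulr1.
Qed.

Lemma prod_split (I J : finType) (c : R) (a : I -> R) (b : J -> R) :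
  \sum_i \sum_j c * (a i * b j) = c * ((\sum_i a i) * (\sum_j b j)).
Proof.
rewrite mulr_suml mulr_sumr; apply: eq_bigr => i _.
by rewrite mulr_sumr mulr_sumr.
Qed.

Definition SM := \sum_(m : Kt) rpow (Pm m) (Rminus (IZR 1) s).
Definition SC := \sum_(w : Yt) rpow (PN w) (Rminus (IZR 1) s) * rpow (Qw w) s.

Lemma total_bound :
  \sum_(e : Et) code_error PM1 Ws PXZ1 Wc e (dec e)
  <= #|{: Et}|%:R * (rpow (#|{: Tt}|%:R^-1) s * (SM * SC)).
Proof.
under eq_bigr do rewrite ce_eq.
rewrite exchange_big /=.
rewrite (eq_bigr (fun m => \sum_(w : Yt) Pm m * PN w * \sum_(e : Et) (dec e (unnoise w (e m)) != m)%:R)); last first.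
  by move=> m _; rewrite exchange_big /=; apply: eq_bigr => w _; rewrite mulr_sumr.
apply: (@le_trans _ _ (\sum_(m : Kt) \sum_(w : Yt) (#|{: Et}|%:R * rpow (#|{: Tt}|%:R^-1) s) *
         (rpow (Pm m) (Rminus (IZR 1) s) * (rpow (PN w) (Rminus (IZR 1) s) * rpow (Qw w) s)))).
  apply: ler_sum => m _; apply: ler_sum => w _.
  apply: (le_trans (pm_bound m w)).
  rewrite rpowM; [|exact/RleP/Pm0|exact/RleP/PN0].
  rewrite rpowM; [|exact/RleP/Qw0|apply/RleP; rewrite invr_ge0; exact: ltW NT_gt0].
  by rewrite ?RmultE le_eqVlt; apply/orP; left; apply/eqP; ring.
by rewrite prod_split /SM /SC !mulrA.
Qed.

Lemma exists_code : exists e : Et,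
  code_error PM1 Ws PXZ1 Wc e (dec e) <= rpow (#|{: Tt}|%:R^-1) s * (SM * SC).
Proof.
pose e0 : Et := [ffun _ => [tuple 0 | i < n.+1]].
have [e1 he1] := fin_argmax (fun e : Et => - code_error PM1 Ws PXZ1 Wc e (dec e)) e0.
exists e1.
rewrite -(ler_pM2l NE_gt0).
apply: le_trans total_bound.
rewrite mulr_natl -sumr_const; apply: ler_sum => e _.
by rewrite -lerN2; exact: he1.
Qed.

End RC.

Section Spec.
Local Open Scope ring_scope.

Lemma pf_spec (T : finType) (A : T -> T -> R) (i0 : T) :
  (forall i j, 0 <= A i j) -> (forall i j, exists t, 0 < tpow A t i j) -> (forall j, exists i, 0 < A i j) ->
  (forall i, 1 <= pf_vec A i) /\ (forall j, \sum_i pf_vec A i * A i j = pf_eig A * pf_vec A j) /\ 0 < pf_eig A.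
Proof.
move=> A0 Airr Acol.
have [l [v hv]] := pf_exists A0 Airr.
have he : exists v, is_pf_pair A (pf_eig A) v.
  exact: (epsilon_spec (inhabits 0) (fun l => exists v, is_pf_pair A l v) (ex_intro _ l (ex_intro _ v hv))).
case: he => v' [vp ve].
have [j0 hj0] := fin_argmax (fun i => - v' i) i0.
have c0 : 0 < v' j0 by apply/RltP; exact: vp.
pose v'' i := v' i / v' j0.
have hv'' : is_pf_pair A (pf_eig A) v'' /\ (exists i, v'' i = R1) /\ (forall i, Rle R1 (v'' i)).
  split; [split|split].
  - move=> i; apply/RltP; apply: divr_gt0 => //; apply/RltP; exact: vp.
  - move=> j; change (\sum_i v' i / v' j0 * A i j = pf_eig A * (v' j / v' j0)).
    rewrite (eq_bigr (fun i => v' i * A i j / v' j0)); last by move=> i _; rewrite mulrAC.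
    rewrite -mulr_suml.
    have e := ve j; change (\sum_i v' i * A i j = pf_eig A * v' j) in e.
    by rewrite e mulrA.
  - by exists j0; rewrite /v'' divff // lt0r_neq0.
  - move=> i; apply/RleP; rewrite ler_pdivlMr // mul1r.
    by have := hj0 i; rewrite lerN2.
have hpf := epsilon_spec (inhabits (fun _ : T => 0))
  (fun v => is_pf_pair A (pf_eig A) v /\ (exists i, v i = R1) /\ (forall i, Rle R1 (v i)))
  (ex_intro _ v'' hv'').
have [[vp2 ve2] [_ v1]] : is_pf_pair A (pf_eig A) (pf_vec A) /\ (exists i, pf_vec A i = R1) /\ (forall i, Rle R1 (pf_vec A i)).
  exact: hpf.
have ve3 : forall j, \sum_i pf_vec A i * A i j = pf_eig A * pf_vec A j by move=> j; exact: ve2 j.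
split; first by move=> i; apply/RleP; exact: v1.
split; first exact: ve3.
have [i hi] := Acol i0.
have vpos : forall i, 0 < pf_vec A i by move=> i'; apply/RltP; exact: vp2.
rewrite -(pmulr_lgt0 _ (vpos i0)) -ve3.
apply: (lt_le_trans _ (@sum_ge_term T (fun i' => pf_vec A i' * A i' i0) i _)).
  exact: mulr_gt0 (vpos i) hi.
move=> i'; apply: mulr_ge0; [exact: ltW | exact: A0].
Qed.

Lemma col_pos (T : finType) (W : T -> T -> R) j : \sum_i W i j = 1 -> exists i, 0 < W i j.
Proof.
move=> h; case: (boolP [exists i, 0 < W i j]) => [/existsP //| /existsPn hn].
have hle : forall i, W i j <= 0 by move=> i; rewrite leNgt (negbTE (hn i)).
have : \sum_i W i j <= 0 by apply: (le_trans (ler_sum _ (fun i _ => hle i))); rewrite big1_eq.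
by rewrite h ler10.
Qed.

Lemma WcZ_ge0 (X : finZmodType) (Z : finType) (Wc : X * Z -> X * Z -> R) :
  (forall i j, 0 <= Wc i j) -> forall z z', 0 <= WcZ Wc z z'.
Proof. move=> W0 z z'; apply: sumr_ge0 => x _; exact: W0. Qed.

Lemma WcZ_pos (X : finZmodType) (Z : finType) (Wc : X * Z -> X * Z -> R) :
  (forall i j, 0 <= Wc i j) -> assumption1 Wc -> forall a b, 0 < Wc a b -> 0 < WcZ Wc a.2 b.2.
Proof.
move=> W0 hA [a1 a2] [b1 b2] h /=.
rewrite /WcZ (hA a2 0 b1 b2).
apply: (lt_le_trans h (@sum_ge_term X (fun x => Wc (x, a2) (b1, b2)) a1 _)) => x; exact: W0.
Qed.

Lemma PZ1_ge0 (X : finZmodType) (Z : finType) (P : X * Z -> R) :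
  (forall a, 0 <= P a) -> forall z, 0 <= PZ1 P z.
Proof. move=> P0 z; apply: sumr_ge0 => x _; exact: P0. Qed.

End Spec.

Section Bounds.
Local Open Scope ring_scope.

Lemma rpow_ge0' a t : 0 <= rpow a t. Proof. apply/RleP; exact: rpow_ge0. Qed.

Lemma SM_bound (M : finType) (PM1 : M -> R) (Ws : M -> M -> R) (s : R) (k : nat) (l : R) (v : M -> R) :
  (forall m, 0 <= PM1 m) -> (forall i j, 0 <= Ws i j) -> (forall i, 1 <= v i) ->
  (forall j, \sum_i v i * As Ws s i j = l * v j) ->
  \sum_(m : k.+1.-tuple M) rpow (markov_prob PM1 Ws m) (Rminus (IZR 1) s)
    <= l ^+ k * \sum_m v m * rpow (PM1 m) (Rminus (IZR 1) s).
Proof.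
move=> P0 W0 v1 ve.
rewrite sum_tuple_cons mulr_sumr; apply: ler_sum => x _.
have hb := @path_bound M (As Ws s) l v (fun prev t => rpow (path_prob Ws prev t) (Rminus (IZR 1) s)).
have {}hb := hb (fun i j => rpow_ge0' _ _) v1 ve.
have {}hb := hb (fun prev => rpow1 _).
have {}hb : forall n prev, \sum_(t : n.-tuple M) rpow (path_prob Ws prev t) (Rminus (IZR 1) s) <= l ^+ n * v prev.
  apply: hb => prev y t /=; rewrite rpowM //; apply/RleP; [exact: W0 | exact: path_prob_ge0].
rewrite (eq_bigr (fun t : k.-tuple M => rpow (PM1 x) (Rminus (IZR 1) s) * rpow (path_prob Ws x t) (Rminus (IZR 1) s))); last first.
  by move=> t _ /=; rewrite rpowM //; apply/RleP; [exact: P0 | exact: path_prob_ge0].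
rewrite -mulr_sumr.
apply: (le_trans (ler_wpM2l (rpow_ge0' _ _) (hb k x))).
by rewrite le_eqVlt; apply/orP; left; apply/eqP; ring.
Qed.

Lemma SC_bound (X : finZmodType) (Z : finType) (PXZ1 : X * Z -> R) (Wc : X * Z -> X * Z -> R)
  (s : R) (n : nat) (l : R) (v : X * Z -> R) :
  (forall a, 0 <= PXZ1 a) -> (forall i j, 0 <= Wc i j) -> assumption1 Wc -> (forall i, 1 <= v i) ->
  (forall j, \sum_i v i * Ac Wc s i j = l * v j) ->
  \sum_(w : n.+1.-tuple (X * Z)) rpow (markov_prob PXZ1 Wc w) (Rminus (IZR 1) s)
       * rpow (\sum_(t : n.+1.-tuple X) markov_prob PXZ1 Wc (unnoise w t)) s
    <= l ^+ n * \sum_a v a * (rpow (PXZ1 a) (Rminus (IZR 1) s) * rpow (PZ1 PXZ1 a.2) s).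
Proof.
move=> P0 W0 hA v1 ve.
under eq_bigr do rewrite Q_eq //.
rewrite sum_tuple_cons mulr_sumr; apply: ler_sum => b _.
pose hc (prev : X * Z) (t : seq (X * Z)) := rpow (path_prob Wc prev t) (Rminus (IZR 1) s)
   * rpow (path_prob (WcZ Wc) prev.2 [seq p.2 | p <- t]) s.
have hb := @path_bound (X * Z)%type (Ac Wc s) l v hc.
have Ac0 : forall i j, 0 <= Ac Wc s i j.
  by move=> i j; apply: mulr_ge0; apply/RleP; exact: rpow_ge0.
have {}hb := hb Ac0 v1 ve.
have {}hb : forall n prev, \sum_(t : n.-tuple (X * Z)) hc prev t <= l ^+ n * v prev.
  apply: hb.
    by move=> prev; rewrite /hc /= !rpow1 mulr1.
  move=> prev y t; rewrite /hc /= rpowM; last 2 first.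
  - by apply/RleP; exact: W0.
  - by apply/RleP; exact: path_prob_ge0.
  rewrite rpowM; last 2 first.
  - by apply/RleP; exact: WcZ_ge0.
  - by apply/RleP; apply: path_prob_ge0; exact: WcZ_ge0.
  rewrite /Ac ?RmultE; ring.
rewrite (eq_bigr (fun t : n.-tuple (X * Z) => (rpow (PXZ1 b) (Rminus (IZR 1) s) * rpow (PZ1 PXZ1 b.2) s) * hc b t)); last first.
  move=> t _ /=; rewrite /hc rpowM; last 2 first.
  - by apply/RleP; exact: P0.
  - by apply/RleP; exact: path_prob_ge0.
  rewrite rpowM; last 2 first.
  - by apply/RleP; exact: PZ1_ge0.
  - by apply/RleP; apply: path_prob_ge0; exact: WcZ_ge0.
  rewrite ?RmultE; ring.
rewrite -mulr_sumr.
apply: (le_trans (ler_wpM2l _ (hb n b))).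
  by apply: mulr_ge0; apply/RleP; exact: rpow_ge0.
by rewrite le_eqVlt; apply/orP; left; apply/eqP; ring.
Qed.

Lemma ce0 (M : finType) (X : finZmodType) (Z : finType) k n (PM1 : M -> R) (Ws : M -> M -> R)
  (PXZ1 : X * Z -> R) (Wc : X * Z -> X * Z -> R) e d :
  (forall m, 0 <= PM1 m) -> (forall i j, 0 <= Ws i j) -> (forall a, 0 <= PXZ1 a) -> (forall i j, 0 <= Wc i j) ->
  0 <= @code_error M X Z k n PM1 Ws PXZ1 Wc e d.
Proof.
move=> P0 W0 Q0 V0; apply: sumr_ge0 => m _; apply: mulr_ge0; first exact: markov_prob_ge0.
apply: sumr_ge0 => y _; case: (d y == m) => //; exact: markov_prob_ge0.
Qed.

Lemma Pj_le (M : finType) (X : finZmodType) (Z : finType) k n (PM1 : M -> R) (Ws : M -> M -> R)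
  (PXZ1 : X * Z -> R) (Wc : X * Z -> X * Z -> R) e d :
  (forall m, 0 <= PM1 m) -> (forall i j, 0 <= Ws i j) -> (forall a, 0 <= PXZ1 a) -> (forall i j, 0 <= Wc i j) ->
  Pj k n PM1 Ws PXZ1 Wc <= @code_error M X Z k n PM1 Ws PXZ1 Wc e d.
Proof.
move=> P0 W0 Q0 V0.
pose E := fun r => exists (e : k.-tuple M -> n.-tuple X) (d : n.-tuple (X * Z) -> k.-tuple M),
  r = code_error PM1 Ws PXZ1 Wc e d.
have hb : bound (fun x => E (Ropp x)).
  exists R0 => x [e' [d' hx]].
  have h := ce0 e' d' P0 W0 Q0 V0; rewrite -hx in h.
  apply/RleP; by rewrite -oppr_ge0.
have hex : exists x, E (Ropp x).
  by exists (Ropp (code_error PM1 Ws PXZ1 Wc e d)), e, d; rewrite Ropp_involutive.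
case: (completeness _ hb hex) => m [hm1 hm2].
have hinf : is_inf E (Ropp m).
  split.
  - move=> r Er.
    have h : Rle (Ropp r) m by apply: hm1; rewrite Ropp_involutive.
    lra.
  - move=> q hq.
    have h : Rle m (Ropp q).
      apply: hm2 => x hx; have := hq _ hx => h; lra.
    lra.
have [hlow _] := epsilon_spec (inhabits R0) (is_inf E) (ex_intro _ (Ropp m) hinf).
apply/RleP; apply: hlow; by exists e, d.
Qed.

End Bounds.

Section Main.
Local Open Scope ring_scope.

Lemma rpow_gt0' a t : 0 < a -> 0 < rpow a t.
Proof. move=> h; apply/RltP; apply: rpow_gt0; exact/RltP. Qed.

Lemma pos_exists (T : finType) (F : T -> R) : \sum_i F i = 1 -> exists i, 0 < F i.
Proof.
move=> h; case: (boolP [exists i, 0 < F i]) => [/existsP //| /existsPn hn].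
have hle : forall i, F i <= 0 by move=> i; rewrite leNgt (negbTE (hn i)).
have : \sum_i F i <= 0 by apply: (le_trans (ler_sum _ (fun i _ => hle i))); rewrite big1_eq.
by rewrite h ler10.
Qed.

Lemma main_core (M : finType) (X : finZmodType) (Z : finType)
  (PM1 : M -> R) (Ws : M -> M -> R) (PXZ1 : X * Z -> R) (Wc : X * Z -> X * Z -> R)
  (hWs : stochastic Ws) (hWs_irr : irreducible Ws) (hPM1 : distribution PM1)
  (hWc : stochastic Wc) (hWc_irr : irreducible Wc) (hPXZ1 : distribution PXZ1)
  (hA1 : assumption1 Wc) (k n : nat) (s : R) (hs0 : Rlt 0 s) (hs1 : Rlt s 1) :
  Rle (Pj k.+1 n.+1 PM1 Ws PXZ1 Wc)
    (Rmult (rpow (Rinv (pow (INR #|X|) n.+1)) s)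
      (Rmult (Rmult (pow (pf_eig (As Ws s)) k)
                    (fsum (fun m => Rmult (pf_vec (As Ws s) m) (rpow (PM1 m) (Rminus (IZR 1) s)))))
             (Rmult (pow (pf_eig (Ac Wc s)) n)
                    (fsum (fun a => Rmult (pf_vec (Ac Wc s) a)
                       (Rmult (rpow (PXZ1 a) (Rminus (IZR 1) s)) (rpow (PZ1 PXZ1 a.2) s)))))))
  /\ Rlt 0 (pf_eig (As Ws s)) /\ Rlt 0 (pf_eig (Ac Wc s))
  /\ Rlt 0 (fsum (fun m => Rmult (pf_vec (As Ws s) m) (rpow (PM1 m) (Rminus (IZR 1) s))))
  /\ Rlt 0 (fsum (fun a => Rmult (pf_vec (Ac Wc s) a)
                       (Rmult (rpow (PXZ1 a) (Rminus (IZR 1) s)) (rpow (PZ1 PXZ1 a.2) s)))).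
Proof.
case: hWs => Ws0 Wss; case: hWc => Wc0 Wcs; case: hPM1 => PM0 PMs; case: hPXZ1 => PX0 PXs.
have Ws0' : forall i j, 0 <= Ws i j by move=> i j; apply/RleP; exact: Ws0.
have Wc0' : forall i j, 0 <= Wc i j by move=> i j; apply/RleP; exact: Wc0.
have PM0' : forall m, 0 <= PM1 m by move=> m; apply/RleP; exact: PM0.
have PX0' : forall a, 0 <= PXZ1 a by move=> a; apply/RleP; exact: PX0.
have Wss' : forall i, \sum_j Ws j i = 1 by move=> i; exact: Wss.
have Wcs' : forall i, \sum_j Wc j i = 1 by move=> i; exact: Wcs.
have PMs' : \sum_m PM1 m = 1 by exact: PMs.
have PXs' : \sum_a PXZ1 a = 1 by exact: PXs.
have hs0' : 0 < s by apply/RltP.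
have hs1' : s < 1 by apply/RltP.
have [m0 hm0] := pos_exists PMs'.
have [[a1 a2] ha0] := pos_exists PXs'.
have As0 : forall i j, 0 <= As Ws s i j by move=> i j; apply/RleP; exact: rpow_ge0.
have Aspos : forall i j, 0 < Ws i j -> 0 < As Ws s i j by move=> i j h; exact: rpow_gt0'.
have Asirr : forall i j, exists t, 0 < tpow (As Ws s) t i j.
  move=> i j; case: (hWs_irr j i) => t [_ ht]; exists t.
  by apply: (tpow_pos_mono Ws0' As0 Aspos); apply/RltP.
have Ascol : forall j, exists i, 0 < As Ws s i j.
  by move=> j; have [i hi] := col_pos (Wss' j); exists i; exact: Aspos.
have [v1s [ves Lspos]] := pf_spec m0 As0 Asirr Ascol.
have Ac0 : forall i j, 0 <= Ac Wc s i j.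
  by move=> i j; apply: mulr_ge0; apply/RleP; exact: rpow_ge0.
have Acpos : forall i j, 0 < Wc i j -> 0 < Ac Wc s i j.
  move=> i j h; apply: mulr_gt0; apply: rpow_gt0' => //; exact: WcZ_pos.
have Acirr : forall i j, exists t, 0 < tpow (Ac Wc s) t i j.
  move=> i j; case: (hWc_irr j i) => t [_ ht]; exists t.
  by apply: (tpow_pos_mono Wc0' Ac0 Acpos); apply/RltP.
have Accol : forall j, exists i, 0 < Ac Wc s i j.
  by move=> j; have [i hi] := col_pos (Wcs' j); exists i; exact: Acpos.
have [v1c [vec Lcpos]] := pf_spec (a1, a2) Ac0 Acirr Accol.
have DSpos : 0 < \sum_m pf_vec (As Ws s) m * rpow (PM1 m) (Rminus (IZR 1) s).
  apply: (lt_le_trans _ (@sum_ge_term M (fun m => pf_vec (As Ws s) m * rpow (PM1 m) (Rminus (IZR 1) s)) m0 _)).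
    apply: mulr_gt0; [exact: lt_le_trans ltr01 (v1s m0) | exact: rpow_gt0'].
  move=> m; apply: mulr_ge0; [exact: le_trans ler01 (v1s m) | apply/RleP; exact: rpow_ge0].
have PZpos : 0 < PZ1 PXZ1 a2.
  apply: (lt_le_trans ha0 (@sum_ge_term X (fun x => PXZ1 (x, a2)) a1 _)) => x; exact: PX0'.
have DCpos : 0 < \sum_a pf_vec (Ac Wc s) a * (rpow (PXZ1 a) (Rminus (IZR 1) s) * rpow (PZ1 PXZ1 a.2) s).
  apply: (lt_le_trans _ (@sum_ge_term (X * Z)%type (fun a => pf_vec (Ac Wc s) a * (rpow (PXZ1 a) (Rminus (IZR 1) s) * rpow (PZ1 PXZ1 a.2) s)) (a1, a2) _)).
    apply: mulr_gt0; first exact: lt_le_trans ltr01 (v1c _).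
    by apply: mulr_gt0; apply: rpow_gt0'.
  move=> a; apply: mulr_ge0; first exact: le_trans ler01 (v1c a).
  by apply: mulr_ge0; apply/RleP; exact: rpow_ge0.
split; last first.
  split; first by apply/RltP.
  split; first by apply/RltP.
  by split; apply/RltP.
have [e he] := exists_code PM0' Ws0' PX0' Wc0' PMs' Wss' k n m0 hs0' hs1'.
apply/RleP.
apply: (le_trans (Pj_le e _ PM0' Ws0' PX0' Wc0')).
apply: (le_trans he).
have hSM : SM PM1 Ws k s <= pf_eig (As Ws s) ^+ k * \sum_m pf_vec (As Ws s) m * rpow (PM1 m) (Rminus (IZR 1) s).
  exact: (@SM_bound M PM1 Ws s k _ _ PM0' Ws0' v1s ves).
have hSC : SC PXZ1 Wc n s <= pf_eig (Ac Wc s) ^+ n *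
    \sum_a pf_vec (Ac Wc s) a * (rpow (PXZ1 a) (Rminus (IZR 1) s) * rpow (PZ1 PXZ1 a.2) s).
  exact: (@SC_bound X Z PXZ1 Wc s n _ _ PX0' Wc0' hA1 v1c vec).
have SM0 : 0 <= SM PM1 Ws k s by apply: sumr_ge0 => m _; apply/RleP; exact: rpow_ge0.
have SC0 : 0 <= SC PXZ1 Wc n s.
  by apply: sumr_ge0 => w _; apply: mulr_ge0; apply/RleP; exact: rpow_ge0.
have eT : #|{: n.+1.-tuple X}|%:R^-1 = Rinv (pow (INR #|X|) n.+1).
  by rewrite card_tuple natrX RinvE RpowE INRE.
rewrite eT !RmultE !RpowE.
apply: ler_wpM2l; first by apply/RleP; exact: rpow_ge0.
exact: (ler_pM SM0 SC0 hSM hSC).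
Qed.

End Main.

Unset Implicit Arguments.
Open Scope R_scope.

Theorem mainTheorem9 (M : finType) (X : finZmodType) (Z : finType)
  (PM1 : M -> R) (Ws : M -> M -> R)
  (PXZ1 : X * Z -> R) (Wc : X * Z -> X * Z -> R)
  (hWs : stochastic Ws) (hWs_irr : irreducible Ws) (hWs_ap : aperiodic Ws)
  (hPM1 : distribution PM1)
  (hWc : stochastic Wc) (hWc_irr : irreducible Wc) (hWc_ap : aperiodic Wc)
  (hPXZ1 : distribution PXZ1)
  (hA1 : assumption1 Wc)
  (k n : nat) (hk : (2 <= k)%nat) (hn : (2 <= n)%nat) :
  forall s : R, 0 < s < 1 ->
    Pj k n PM1 Ws PXZ1 Wc <=
    exp (- INR n * s * ln (INR #|X|)
         + (INR n - 1) * U Ws Wc ((INR k - 1) / (INR n - 1)) s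
         + delta_s PM1 Ws s + delta_c PXZ1 Wc s).
Proof.
move=> s hs.
case: k hk => [|k] hk //; case: n hn => [|n] hn //.
have [hP [hLs [hLc [hDS hDC]]]] := main_core hWs hWs_irr hPM1 hWc hWc_irr hPXZ1 hA1 k n (proj1 hs) (proj2 hs).
apply: (Rle_trans _ _ _ hP).
have hX : 0 < INR #|X|.
  apply: lt_0_INR; apply/ssrnat.ltP; apply/card_gt0P; by exists GRing.zero.
have hn0 : INR n <> 0.
  apply: not_0_INR => hn'; by move: hn; rewrite hn'.
right.
rewrite rpow_pos; last by apply: Rinv_0_lt_compat; apply: pow_lt.
rewrite ln_Rinv; last exact: pow_lt.
rewrite ln_pow //.
rewrite -(exp_ln (pow (pf_eig (As Ws s)) k)); last exact: pow_lt.
rewrite -(exp_ln (pow (pf_eig (Ac Wc s)) n)); last exact: pow_lt.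
rewrite !ln_pow //.
set DS := fsum _ in hDS *.
set DC := fsum _ in hDC *.
rewrite -(exp_ln DS) // -(exp_ln DC) //.
rewrite -!exp_plus.
congr exp.
rewrite /U /thetaHs /thetaHc /delta_s /delta_c -/DS -/DC.
rewrite !S_INR.
have e1 : INR n + 1 - 1 = INR n by lra.
have e2 : INR k + 1 - 1 = INR k by lra.
rewrite e1 e2.
have e3 : INR n * (INR k / INR n) = INR k.
  by rewrite /Rdiv Rmult_comm Rmult_assoc Rinv_l // Rmult_1_r.
rewrite Rmult_plus_distr_l -Rmult_assoc e3.
nra.
Qed.
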